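(* Let $\mathbbm{k}$ be a field, $n\ge 1$, $m\geq 0$, and $A_1,\dots,A_m\in\mathrm{Mat}_n(\mathbbm{k})$. Then $$\det P_m(A_1,\dots,A_m)=(-1)^{mn}\det Q_m(A_1,\dots,A_m).$$
   Context: For noncommuting variables $a_1,a_2,\dots$ define polynomials by $P_0=1$, $P_1(a_1)=a_1$, $P_m(a_1,\dots,a_m)=P_{m-1}(a_1,\dots,a_{m-1})a_m+P_{m-2}(a_1,\dots,a_{m-2})$, and $Q_0=1$, $Q_1(a_1)=-a_1$, $Q_m(a_1,\dots,a_m)=-Q_{m-1}(a_2,\dots,a_m)a_1+Q_{m-2}(a_3,\dots,a_m)$. (E.g. $P_2=1+a_1a_2$, $Q_2=1+a_2a_1$.) These are evaluated on matrices. *)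

(* Defs.v *)
From HB Require Import structures.
From mathcomp Require Import all_boot all_order all_algebra.
Set Implicit Arguments. Unset Strict Implicit. Unset Printing Implicit Defensive.
Import GRing.Theory.
Local Open Scope ring_scope.

(* Prev [:: a_m; a_{m-1}; ...; a_1] = P_m(a_1,...,a_m):
   P_0 = 1, P_1(a_1) = a_1, P_m = P_{m-1}(a_1..a_{m-1}) a_m + P_{m-2}(a_1..a_{m-2}). *)
Fixpoint Prev (R : ringType) (s : seq R) : R :=
  match s with
  | [::] => 1
  | [:: x] => x
  | x :: ((y :: t) as s') => Prev s' * x + Prev t
  end.

Definition Pcont (R : ringType) (s : seq R) : R := Prev (rev s).

(* Qcont [:: a_1; ...; a_m] = Q_m(a_1,...,a_m):
   Q_0 = 1, Q_1(a_1) = -a_1, Q_m = -Q_{m-1}(a_2..a_m) a_1 + Q_{m-2}(a_3..a_m). *)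
Fixpoint Qcont (R : ringType) (s : seq R) : R :=
  match s with
  | [::] => 1
  | [:: x] => - x
  | x :: ((y :: t) as s') => - (Qcont s' * x) + Qcont t
  end.

(* Main.v *)
Require Import Defs.
From HB Require Import structures.
From mathcomp Require Import all_boot all_order all_algebra.
Import GRing.Theory.
Local Open Scope ring_scope.

Section Aux.
Variables (F : fieldType) (n : nat).
Local Notation N := n.+1.
Local Notation M := 'M[F]_N.
Local Notation MM := 'M[F]_(N + N).

Definition Mb (a : M) : MM := block_mx a 1%:M 1%:M 0.
Definition Mi (a : M) : MM := block_mx 0 1%:M 1%:M (- a).
Definition Xs (s : seq M) : MM := foldr (fun a acc => Mb a *m acc) 1%:M s.
Definition Ys (s : seq M) : MM := foldr (fun a acc => acc *m Mi a) 1%:M s.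

Lemma MbMi a : Mb a *m Mi a = 1%:M.
Proof.
rewrite /Mb /Mi mulmx_block scalar_mx_block.
rewrite !mulmx0 !mul0mx !mulmx1 !mul1mx !addr0 !add0r.
by rewrite subrr.
Qed.

Lemma XY s : Xs s *m Ys s = 1%:M.
Proof.
elim: s => [|a s IH] /=; first by rewrite mulmx1.
by rewrite -mulmxA (mulmxA (Xs s)) IH mul1mx MbMi.
Qed.

Lemma Xs_rcons s a : Xs (rcons s a) = Xs s *m Mb a.
Proof.
elim: s => [|b s IH] /=; first by rewrite mulmx1 mul1mx.
by rewrite IH mulmxA.
Qed.

Definition fP (t : seq M) : M := if t is _ :: t' then Prev t' else 0.
Definition fQ (t : seq M) : M := if t is _ :: t' then Qcont t' else 0.

Lemma Xs_top s : ulsubmx (Xs s) = Prev (rev s) /\ ursubmx (Xs s) = fP (rev s).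
Proof.
elim/last_ind: s => [|s a [IH1 IH2]].
  by rewrite /= scalar_mx_block block_mxKul block_mxKur.
rewrite Xs_rcons rev_rcons -[Xs s]submxK IH1 IH2 /Mb mulmx_block.
rewrite block_mxKul block_mxKur mulmx0 addr0 mulmx1.
by case: (rev s) => [|y t] /=; rewrite ?mul1mx ?addr0 ?mulmx1; split.
Qed.

Lemma Ys_bot s : drsubmx (Ys s) = Qcont s /\ dlsubmx (Ys s) = fQ s.
Proof.
elim: s => [|a s [IH1 IH2]].
  by rewrite /= scalar_mx_block block_mxKdr block_mxKdl.
rewrite /= -[Ys s]submxK IH1 IH2 /Mi mulmx_block.
rewrite block_mxKdr block_mxKdl mulmx0 add0r mulmx1 mulmxN.
case: s {IH1 IH2} => [|y t] /=; rewrite ?mul1mx ?add0r ?mulmx1; by split => //; rewrite addrC.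
Qed.

Lemma det_Mb a : \det (Mb a) = \det (block_mx (0 : M) 1%:M 1%:M 0 : MM).
Proof.
have -> : Mb a = block_mx 1%:M a 0 1%:M *m block_mx (0 : M) 1%:M 1%:M 0.
  by rewrite /Mb mulmx_block !mulmx0 !mul0mx !mulmx1 !addr0 !add0r.
rewrite det_mulmx det_ublock !det1 !mul1r. by [].
Qed.

Lemma key (s : seq M) : \det (Pcont s) =
  \det (block_mx (0 : M) 1%:M 1%:M 0 : MM) ^+ size s * \det (Qcont s).
Proof.
have [T1 _] := Xs_top s.
have [B1 _] := Ys_bot s.
have dX : \det (Xs s) = \det (block_mx (0 : M) 1%:M 1%:M 0 : MM) ^+ size s.
  elim: s {T1 B1} => [|a s IH] /=; first by rewrite det1.
  by rewrite det_mulmx IH det_Mb exprS.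
have E := XY s.
set Z : MM := block_mx 1%:M (ursubmx (Ys s)) 0 (drsubmx (Ys s)).
have XZ : Xs s *m Z = block_mx (ulsubmx (Xs s)) 0 (dlsubmx (Xs s)) 1%:M.
  move: E; rewrite -[Xs s]submxK -[Ys s]submxK mulmx_block scalar_mx_block.
  case/eq_block_mx => _ E12 _ E22.
  rewrite /Z -[Xs s]submxK mulmx_block !block_mxKul !block_mxKdl !mulmx1 !mulmx0 !addr0 !block_mxKur !block_mxKdr E12 E22.
  by [].
have := congr1 determinant XZ.
rewrite det_mulmx det_ublock det_lblock det1 !mulr1 mul1r dX T1 B1 => <-.
by [].
Qed.
End Aux.

(* n >= 1 is encoded by matrices of size n.+1; the list s = [:: A_1; ...; A_m]. *)
Theorem mainTheorem2 (F : fieldType) (n : nat) (s : seq 'M[F]_n.+1) :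
  \det (Pcont s) = (-1) ^+ (size s * n.+1) * \det (Qcont s).
Proof.
rewrite key.
set c := \det _.
have Hc : c = (-1) ^+ n.+1.
  have := @key F n [:: (1%:M : 'M[F]_n.+1)].
  rewrite /Pcont /= det1 -scaleN1r detZ det1 mulr1 expr1 -/c => /(congr1 (fun x => x * (-1) ^+ n.+1)).
  by rewrite -mulrA -exprD addnn -muln2 exprM sqrr_sign mulr1 mul1r => <-.
by rewrite Hc -exprM mulnC.
Qed.
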